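(* The set $\mathcal{B}_{2,3,4}$ consisting of the identities (M1) $(xy)(zt)=(xz)(yt)$, (M2) $(xy)(zt)=(ty)(zx)$, (M3) $((xy)z)t=((xt)z)y$, (M4) $(x(yz))t=(x(tz))y$, (M5) $x((yz)t)=z((yx)t)$, (M6) $x(y(zt))=z(y(xt))$, and $(xy^2)y^2=x$ is a basis for $\Sigma_{2,3,4}$.
   Context: $y^2$ denotes $yy$. $\Sigma_{2,3,4}$ is the set of groupoid identities satisfied in the integers $\mathbb{Z}$ by each of the binary operations $x-y$, $-x+y$ and $-x-y$. A basis is a set of identities whose equational consequences are exactly $\Sigma_{2,3,4}$. *)

(* Defs.v *)
From Stdlib Require Import ZArith List.
Import ListNotations.
Open Scope Z_scope.

Inductive term : Type :=
| Var : nat -> term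
| Op : term -> term -> term.

Fixpoint eval (f : Z -> Z -> Z) (v : nat -> Z) (t : term) : Z :=
  match t with
  | Var n => v n
  | Op a b => f (eval f v a) (eval f v b)
  end.

Definition holds_in (f : Z -> Z -> Z) (s t : term) : Prop :=
  forall v : nat -> Z, eval f v s = eval f v t.

Definition op1 (a b : Z) : Z := a - b.
Definition op2 (a b : Z) : Z := - a + b.
Definition op3 (a b : Z) : Z := - a - b.

Definition Sigma234 (s t : term) : Prop :=
  holds_in op1 s t /\ holds_in op2 s t /\ holds_in op3 s t.

Fixpoint subst (sg : nat -> term) (t : term) : term :=
  match t with
  | Var n => sg n
  | Op a b => Op (subst sg a) (subst sg b)
  end.

Inductive consequence (E : term -> term -> Prop) : term -> term -> Prop :=
| cons_ax : forall s t sg, E s t -> consequence E (subst sg s) (subst sg t)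
| cons_refl : forall t, consequence E t t
| cons_sym : forall s t, consequence E s t -> consequence E t s
| cons_trans : forall s t u,
    consequence E s t -> consequence E t u -> consequence E s u
| cons_cong : forall s1 t1 s2 t2,
    consequence E s1 t1 -> consequence E s2 t2 ->
    consequence E (Op s1 s2) (Op t1 t2).

Definition is_basis (E T : term -> term -> Prop) : Prop :=
  forall s t, consequence E s t <-> T s t.

Definition x := Var 0.
Definition y := Var 1.
Definition z := Var 2.
Definition t := Var 3.

Definition B234_list : list (term * term) :=
  [ (Op (Op x y) (Op z t), Op (Op x z) (Op y t));
    (Op (Op x y) (Op z t), Op (Op t y) (Op z x));
    (Op (Op (Op x y) z) t, Op (Op (Op x t) z) y);
    (Op (Op x (Op y z)) t, Op (Op x (Op t z)) y);
    (Op x (Op (Op y z) t), Op z (Op (Op y x) t));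
    (Op x (Op y (Op z t)), Op z (Op y (Op x t)));
    (Op (Op x (Op y y)) (Op y y), x) ].

Definition B234 (s u : term) : Prop := In (s, u) B234_list.

(* Main.v *)
Require Import Defs.
From Stdlib Require Import ZArith List Lia Setoid Morphisms Bool.
Import ListNotations.
Open Scope Z_scope.

Notation "a ≈ b" := (consequence B234 a b) (at level 70).

Lemma inB1 p q : In (p,q) B234_list -> B234 p q.
Proof. auto. Qed.

Ltac inlist := unfold B234, B234_list; simpl; repeat (first [left; reflexivity | right]).

Definition sg4 (a b c d : term) : nat -> term :=
  fun n => match n with 0%nat => a | 1%nat => b | 2%nat => c | _ => d end.

Lemma ax1 a b c d : Op (Op a b) (Op c d) ≈ Op (Op a c) (Op b d).
Proof. refine (cons_ax _ (Op (Op x y) (Op z t)) (Op (Op x z) (Op y t)) (sg4 a b c d) _). inlist. Qed.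
Lemma ax2 a b c d : Op (Op a b) (Op c d) ≈ Op (Op d b) (Op c a).
Proof. refine (cons_ax _ (Op (Op x y) (Op z t)) (Op (Op t y) (Op z x)) (sg4 a b c d) _). inlist. Qed.
Lemma ax3 a b c d : Op (Op (Op a b) c) d ≈ Op (Op (Op a d) c) b.
Proof. refine (cons_ax _ (Op (Op (Op x y) z) t) (Op (Op (Op x t) z) y) (sg4 a b c d) _). inlist. Qed.
Lemma ax4 a b c d : Op (Op a (Op b c)) d ≈ Op (Op a (Op d c)) b.
Proof. refine (cons_ax _ (Op (Op x (Op y z)) t) (Op (Op x (Op t z)) y) (sg4 a b c d) _). inlist. Qed.
Lemma ax5 a b c d : Op a (Op (Op b c) d) ≈ Op c (Op (Op b a) d).
Proof. refine (cons_ax _ (Op x (Op (Op y z) t)) (Op z (Op (Op y x) t)) (sg4 a b c d) _). inlist. Qed.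
Lemma ax6 a b c d : Op a (Op b (Op c d)) ≈ Op c (Op b (Op a d)).
Proof. refine (cons_ax _ (Op x (Op y (Op z t))) (Op z (Op y (Op x t))) (sg4 a b c d) _). inlist. Qed.
Lemma ax7 a b : Op (Op a (Op b b)) (Op b b) ≈ a.
Proof. refine (cons_ax _ (Op (Op x (Op y y)) (Op y y)) x (sg4 a b a a) _). inlist. Qed.
Lemma ax1' a b c d : Op (Op a c) (Op b d) ≈ Op (Op a b) (Op c d).
Proof. apply cons_sym, ax1. Qed.
Lemma ax2' a b c d : Op (Op d b) (Op c a) ≈ Op (Op a b) (Op c d).
Proof. apply cons_sym, ax2. Qed.
Lemma ax3' a b c d : Op (Op (Op a d) c) b ≈ Op (Op (Op a b) c) d.
Proof. apply cons_sym, ax3. Qed.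
Lemma ax4' a b c d : Op (Op a (Op d c)) b ≈ Op (Op a (Op b c)) d.
Proof. apply cons_sym, ax4. Qed.
Lemma ax5' a b c d : Op c (Op (Op b a) d) ≈ Op a (Op (Op b c) d).
Proof. apply cons_sym, ax5. Qed.
Lemma ax6' a b c d : Op c (Op b (Op a d)) ≈ Op a (Op b (Op c d)).
Proof. apply cons_sym, ax6. Qed.
Lemma ax7' a b : a ≈ Op (Op a (Op b b)) (Op b b).
Proof. apply cons_sym, ax7. Qed.

Ltac one :=
  first [ apply ax1 | apply ax2 | apply ax3 | apply ax4 | apply ax5 | apply ax6 | apply ax7
        | apply ax1' | apply ax2' | apply ax3' | apply ax4' | apply ax5' | apply ax6' | apply ax7'
        | apply cons_cong; [apply cons_refl | one]
        | apply cons_cong; [one | apply cons_refl] ].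

#[global] Instance cons_Equiv : Equivalence (consequence B234).
Proof. split. intro; apply cons_refl. intros ? ? ?; apply cons_sym; auto.
  intros ? ? ? ? ?; eapply cons_trans; eauto. Qed.
#[global] Instance Op_Proper : Proper (consequence B234 ==> consequence B234 ==> consequence B234) Op.
Proof. intros ? ? ? ? ? ?; apply cons_cong; auto. Qed.

Definition N := Op (Op x x) x.
Definition T (a b u : term) := Op (Op u a) b.
Definition nn (a : term) := Op (Op a a) a.
#[global] Instance T_Proper a b : Proper (consequence B234 ==> consequence B234) (T a b).
Proof. intros ? ? ?; unfold T; rewrite H; reflexivity. Qed.
Lemma Tinv_raw (a b u : term) : T a b (T (nn b) (nn a) u) ≈ u.
Proof.
  unfold T, N, nn.
  apply (cons_trans _ _ (Op (Op (Op (Op u (Op (Op b b) b)) (Op a a)) (Op a a)) b) _); [one|].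
  apply (cons_trans _ _ (Op (Op u (Op (Op b b) b)) b) _); [one|].
  apply (cons_trans _ _ (Op (Op u (Op b b)) (Op b b)) _); [one|].
  one.
Qed.

Lemma Lm (s a b u : term) : Op s (T a b u) ≈ T (Op N a) (Op x b) (Op s u).
Proof.
  unfold T, N, nn.
  apply (cons_trans _ _ (Op (Op (Op s (Op x x)) (Op x x)) (Op (Op u a) b)) _); [one|].
  apply (cons_trans _ _ (Op (Op (Op s (Op (Op x x) x)) x) (Op (Op u a) b)) _); [one|].
  apply (cons_trans _ _ (Op (Op (Op s (Op (Op x x) x)) (Op u a)) (Op x b)) _); [one|].
  one.
Qed.
Lemma raw_S_A (u v : term) : (Op (Op (Op (Op (Op (Op u x) x) (Op x x)) (Op (Op x x) x)) (Op (Op x x) x)) (Op x x)) ≈ u.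
Proof.
  unfold T, N, nn.
  apply (cons_trans _ _ (Op (Op (Op (Op (Op (Op u x) (Op (Op x x) x)) (Op x x)) x) (Op (Op x x) x)) (Op x x)) _); [one|].
  apply (cons_trans _ _ (Op (Op (Op (Op (Op (Op u x) (Op (Op x x) x)) (Op x x)) (Op x x)) (Op (Op x x) x)) x) _); [one|].
  apply (cons_trans _ _ (Op (Op (Op (Op (Op (Op u x) (Op (Op x x) x)) (Op x x)) (Op x x)) (Op x x)) (Op x x)) _); [one|].
  apply (cons_trans _ _ (Op (Op (Op (Op (Op (Op u (Op x x)) (Op x x)) (Op x x)) (Op x x)) (Op x x)) (Op x x)) _); [one|].
  apply (cons_trans _ _ (Op (Op (Op (Op u (Op x x)) (Op x x)) (Op x x)) (Op x x)) _); [one|].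
  apply (cons_trans _ _ (Op (Op u (Op x x)) (Op x x)) _); [one|].
  one.
Qed.

Lemma raw_S_B (u v : term) : (Op (Op (Op (Op u (Op x (Op x x))) (Op (Op x x) x)) (Op (Op x x) x)) (Op x (Op x x))) ≈ u.
Proof.
  unfold T, N, nn.
  apply (cons_trans _ _ (Op (Op (Op (Op u (Op x (Op x x))) (Op x (Op x x))) (Op (Op x x) x)) (Op (Op x x) x)) _); [one|].
  apply (cons_trans _ _ (Op (Op (Op (Op u (Op (Op x (Op x x)) (Op x x))) x) (Op (Op x x) x)) (Op (Op x x) x)) _); [one|].
  apply (cons_trans _ _ (Op (Op (Op (Op u (Op (Op x x) x)) x) (Op (Op x (Op x x)) (Op x x))) (Op (Op x x) x)) _); [one|].
  apply (cons_trans _ _ (Op (Op (Op (Op u (Op (Op x x) x)) x) (Op x x)) (Op (Op (Op x (Op x x)) (Op x x)) x)) _); [one|].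
  apply (cons_trans _ _ (Op (Op (Op (Op u (Op (Op x x) x)) x) (Op x x)) (Op x x)) _); [one|].
  apply (cons_trans _ _ (Op (Op u (Op (Op x x) x)) x) _); [one|].
  apply (cons_trans _ _ (Op (Op u (Op x x)) (Op x x)) _); [one|].
  one.
Qed.

Lemma raw_S_R (u v : term) : (Op (Op (Op (Op (Op (Op (Op (Op (Op (Op u x) x) (Op x v)) (Op (Op x x) x)) (Op (Op x x) x)) v) v) (Op (Op x x) x)) (Op (Op x x) x)) (Op x v)) ≈ u.
Proof.
  unfold T, N, nn.
  apply (cons_trans _ _ (Op (Op (Op (Op (Op (Op (Op (Op (Op (Op u x) x) (Op x v)) v) (Op (Op x x) x)) (Op (Op x x) x)) v) (Op (Op x x) x)) (Op (Op x x) x)) (Op x v)) _); [one|].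
  apply (cons_trans _ _ (Op (Op (Op (Op (Op (Op (Op (Op (Op (Op u x) x) (Op v v)) x) (Op (Op x x) x)) (Op (Op x x) x)) v) (Op (Op x x) x)) (Op (Op x x) x)) (Op x v)) _); [one|].
  apply (cons_trans _ _ (Op (Op (Op (Op (Op (Op (Op (Op (Op (Op u x) x) (Op v v)) (Op (Op x x) x)) (Op (Op x x) x)) x) v) (Op (Op x x) x)) (Op (Op x x) x)) (Op x v)) _); [one|].
  apply (cons_trans _ _ (Op (Op (Op (Op (Op (Op (Op (Op (Op (Op u x) x) (Op v v)) (Op (Op x x) x)) (Op x x)) (Op x x)) v) (Op (Op x x) x)) (Op (Op x x) x)) (Op x v)) _); [one|].
  apply (cons_trans _ _ (Op (Op (Op (Op (Op (Op (Op (Op (Op (Op u x) (Op (Op x x) x)) (Op v v)) x) (Op x x)) (Op x x)) v) (Op (Op x x) x)) (Op (Op x x) x)) (Op x v)) _); [one|].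
  apply (cons_trans _ _ (Op (Op (Op (Op (Op (Op (Op (Op (Op (Op u x) (Op (Op x x) x)) (Op v v)) (Op x x)) (Op x x)) x) v) (Op (Op x x) x)) (Op (Op x x) x)) (Op x v)) _); [one|].
  apply (cons_trans _ _ (Op (Op (Op (Op (Op (Op (Op (Op (Op (Op u x) (Op (Op x x) x)) (Op v v)) (Op x x)) (Op x x)) (Op (Op x x) x)) v) x) (Op (Op x x) x)) (Op x v)) _); [one|].
  apply (cons_trans _ _ (Op (Op (Op (Op (Op (Op (Op (Op (Op (Op u x) (Op (Op x x) x)) (Op v v)) (Op x x)) (Op x x)) (Op (Op x x) x)) v) (Op x v)) (Op (Op x x) x)) x) _); [one|].
  apply (cons_trans _ _ (Op (Op (Op (Op (Op (Op (Op (Op (Op (Op u x) (Op (Op x x) x)) (Op v v)) (Op x x)) (Op x x)) (Op (Op x x) x)) v) (Op x v)) (Op x x)) (Op x x)) _); [one|].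
  apply (cons_trans _ _ (Op (Op (Op (Op (Op (Op (Op (Op (Op (Op u x) (Op (Op x x) x)) (Op v v)) (Op x x)) (Op x x)) (Op (Op x x) x)) x) (Op v v)) (Op x x)) (Op x x)) _); [one|].
  apply (cons_trans _ _ (Op (Op (Op (Op (Op (Op (Op (Op (Op (Op u (Op x x)) (Op x x)) (Op v v)) (Op x x)) (Op x x)) (Op (Op x x) x)) x) (Op v v)) (Op x x)) (Op x x)) _); [one|].
  apply (cons_trans _ _ (Op (Op (Op (Op (Op (Op (Op (Op (Op (Op u (Op x x)) (Op x x)) (Op v v)) (Op x x)) (Op x x)) (Op v v)) x) (Op (Op x x) x)) (Op x x)) (Op x x)) _); [one|].
  apply (cons_trans _ _ (Op (Op (Op (Op (Op (Op (Op (Op (Op (Op u (Op x x)) (Op x x)) (Op v v)) (Op v v)) (Op x x)) (Op x x)) x) (Op (Op x x) x)) (Op x x)) (Op x x)) _); [one|].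
  apply (cons_trans _ _ (Op (Op (Op (Op (Op (Op (Op (Op u (Op x x)) (Op x x)) (Op x x)) (Op x x)) x) (Op (Op x x) x)) (Op x x)) (Op x x)) _); [one|].
  apply (cons_trans _ _ (Op (Op (Op (Op (Op (Op u (Op x x)) (Op x x)) x) (Op (Op x x) x)) (Op x x)) (Op x x)) _); [one|].
  apply (cons_trans _ _ (Op (Op (Op (Op u x) (Op (Op x x) x)) (Op x x)) (Op x x)) _); [one|].
  apply (cons_trans _ _ (Op (Op u x) (Op (Op x x) x)) _); [one|].
  apply (cons_trans _ _ (Op (Op u (Op x x)) (Op x x)) _); [one|].
  one.
Qed.

Lemma raw_L_P (u v : term) : (Op (Op (Op (Op u (Op x x)) (Op (Op x x) x)) (Op (Op (Op x x) x) v)) (Op x (Op (Op x x) x))) ≈ (Op (Op u (Op x v)) (Op (Op x x) x)).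
Proof.
  unfold T, N, nn.
  apply (cons_trans _ _ (Op (Op (Op (Op u (Op x x)) (Op x (Op (Op x x) x))) (Op (Op (Op x x) x) v)) (Op (Op x x) x)) _); [one|].
  apply (cons_trans _ _ (Op (Op (Op (Op u (Op (Op x (Op (Op x x) x)) x)) x) (Op (Op (Op x x) x) v)) (Op (Op x x) x)) _); [one|].
  apply (cons_trans _ _ (Op (Op (Op (Op u (Op (Op x (Op x x)) (Op x x))) x) (Op (Op (Op x x) x) v)) (Op (Op x x) x)) _); [one|].
  apply (cons_trans _ _ (Op (Op (Op (Op u x) x) (Op (Op (Op x x) x) v)) (Op (Op x x) x)) _); [one|].
  apply (cons_trans _ _ (Op (Op (Op (Op u (Op (Op (Op x x) x) v)) x) x) (Op (Op x x) x)) _); [one|].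
  apply (cons_trans _ _ (Op (Op (Op (Op u (Op (Op (Op x x) x) v)) x) (Op x x)) (Op x x)) _); [one|].
  apply (cons_trans _ _ (Op (Op u (Op (Op (Op x x) x) v)) x) _); [one|].
  one.
Qed.

Lemma raw_L_Q (u v : term) : (Op (Op (Op (Op (Op (Op (Op (Op u (Op x v)) (Op (Op x x) x)) (Op (Op x x) x)) v) v) (Op (Op x x) x)) (Op (Op (Op x x) x) (Op (Op x x) x))) (Op x v)) ≈ (Op (Op u (Op x x)) (Op (Op x x) x)).
Proof.
  unfold T, N, nn.
  apply (cons_trans _ _ (Op (Op (Op (Op (Op (Op (Op (Op u (Op x v)) v) (Op (Op x x) x)) (Op (Op x x) x)) v) (Op (Op x x) x)) (Op (Op (Op x x) x) (Op (Op x x) x))) (Op x v)) _); [one|].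
  apply (cons_trans _ _ (Op (Op (Op (Op (Op (Op (Op (Op u (Op v v)) x) (Op (Op x x) x)) (Op (Op x x) x)) v) (Op (Op x x) x)) (Op (Op (Op x x) x) (Op (Op x x) x))) (Op x v)) _); [one|].
  apply (cons_trans _ _ (Op (Op (Op (Op (Op (Op (Op (Op u (Op v v)) x) (Op (Op x x) x)) (Op (Op x x) x)) (Op (Op (Op x x) x) (Op (Op x x) x))) (Op (Op x x) x)) v) (Op x v)) _); [one|].
  apply (cons_trans _ _ (Op (Op (Op (Op (Op (Op (Op (Op u (Op v v)) x) (Op (Op x x) x)) (Op (Op x x) x)) (Op (Op (Op x x) x) (Op (Op x x) x))) (Op (Op x x) x)) x) (Op v v)) _); [one|].
  apply (cons_trans _ _ (Op (Op (Op (Op (Op (Op (Op (Op u (Op v v)) x) (Op (Op x x) x)) (Op (Op x x) x)) (Op (Op (Op x x) x) (Op (Op x x) x))) (Op v v)) x) (Op (Op x x) x)) _); [one|].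
  apply (cons_trans _ _ (Op (Op (Op (Op (Op (Op (Op (Op u (Op v v)) x) (Op (Op x x) x)) (Op v v)) (Op (Op (Op x x) x) (Op (Op x x) x))) (Op (Op x x) x)) x) (Op (Op x x) x)) _); [one|].
  apply (cons_trans _ _ (Op (Op (Op (Op (Op (Op (Op (Op u (Op v v)) (Op v v)) (Op (Op x x) x)) x) (Op (Op (Op x x) x) (Op (Op x x) x))) (Op (Op x x) x)) x) (Op (Op x x) x)) _); [one|].
  apply (cons_trans _ _ (Op (Op (Op (Op (Op (Op u (Op (Op x x) x)) x) (Op (Op (Op x x) x) (Op (Op x x) x))) (Op (Op x x) x)) x) (Op (Op x x) x)) _); [one|].
  apply (cons_trans _ _ (Op (Op (Op (Op (Op (Op u (Op (Op x x) x)) x) (Op (Op (Op x x) (Op x x)) (Op x x))) (Op (Op x x) x)) x) (Op (Op x x) x)) _); [one|].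
  apply (cons_trans _ _ (Op (Op (Op (Op (Op (Op u (Op (Op x x) x)) x) (Op x x)) (Op (Op x x) x)) x) (Op (Op x x) x)) _); [one|].
  apply (cons_trans _ _ (Op (Op (Op (Op (Op (Op u (Op (Op x x) x)) x) x) (Op (Op x x) x)) (Op x x)) (Op (Op x x) x)) _); [one|].
  apply (cons_trans _ _ (Op (Op (Op (Op (Op (Op u (Op (Op x x) x)) x) (Op x x)) (Op x x)) (Op x x)) (Op (Op x x) x)) _); [one|].
  apply (cons_trans _ _ (Op (Op (Op (Op u (Op (Op x x) x)) x) (Op x x)) (Op (Op x x) x)) _); [one|].
  apply (cons_trans _ _ (Op (Op (Op (Op u (Op x x)) (Op x x)) (Op x x)) (Op (Op x x) x)) _); [one|].
  one.
Qed.

Lemma raw_L_R (u v : term) : (Op (Op (Op (Op u (Op x x)) (Op (Op x x) x)) (Op (Op (Op x x) x) (Op x v))) (Op x (Op (Op x x) x))) ≈ (Op (Op (Op (Op u (Op x (Op x x))) (Op (Op x x) x)) v) (Op (Op x x) x)).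
Proof.
  unfold T, N, nn.
  apply (cons_trans _ _ (Op (Op (Op (Op u (Op x x)) (Op x (Op (Op x x) x))) (Op (Op (Op x x) x) (Op x v))) (Op (Op x x) x)) _); [one|].
  apply (cons_trans _ _ (Op (Op (Op (Op u (Op (Op x (Op (Op x x) x)) x)) x) (Op (Op (Op x x) x) (Op x v))) (Op (Op x x) x)) _); [one|].
  apply (cons_trans _ _ (Op (Op (Op (Op u (Op (Op (Op x x) x) (Op x v))) x) (Op (Op x (Op (Op x x) x)) x)) (Op (Op x x) x)) _); [one|].
  apply (cons_trans _ _ (Op (Op (Op (Op u (Op (Op (Op x x) x) (Op x v))) x) (Op x x)) (Op (Op (Op x (Op (Op x x) x)) x) x)) _); [one|].
  apply (cons_trans _ _ (Op (Op (Op (Op u (Op (Op (Op x x) x) (Op x v))) x) (Op x x)) (Op (Op (Op x (Op x x)) (Op x x)) x)) _); [one|].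
  apply (cons_trans _ _ (Op (Op (Op (Op u (Op (Op (Op x x) x) (Op x v))) x) (Op x x)) (Op x x)) _); [one|].
  apply (cons_trans _ _ (Op (Op (Op (Op u (Op (Op (Op x x) x) (Op x v))) (Op x x)) (Op x x)) x) _); [one|].
  apply (cons_trans _ _ (Op (Op (Op (Op u (Op (Op x x) (Op x v))) (Op (Op x x) x)) (Op x x)) x) _); [one|].
  apply (cons_trans _ _ (Op (Op (Op (Op u (Op (Op v x) (Op x x))) (Op (Op x x) x)) (Op x x)) x) _); [one|].
  apply (cons_trans _ _ (Op (Op (Op (Op u (Op (Op v x) (Op x x))) x) (Op x x)) (Op (Op x x) x)) _); [one|].
  apply (cons_trans _ _ (Op (Op (Op (Op u (Op x (Op x x))) (Op v x)) (Op x x)) (Op (Op x x) x)) _); [one|].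
  apply (cons_trans _ _ (Op (Op (Op (Op u (Op x x)) (Op v x)) (Op x (Op x x))) (Op (Op x x) x)) _); [one|].
  apply (cons_trans _ _ (Op (Op (Op (Op u v) (Op (Op x x) x)) (Op x (Op x x))) (Op (Op x x) x)) _); [one|].
  one.
Qed.

Lemma raw_L_A (u v : term) : (Op (Op (Op (Op u (Op x x)) (Op (Op x x) x)) (Op (Op (Op x x) x) (Op x x))) (Op x (Op (Op x x) x))) ≈ (Op (Op u (Op x (Op x x))) (Op (Op x x) x)).
Proof.
  unfold T, N, nn.
  apply (cons_trans _ _ (Op (Op (Op (Op u (Op x x)) (Op x (Op (Op x x) x))) (Op (Op (Op x x) x) (Op x x))) (Op (Op x x) x)) _); [one|].
  apply (cons_trans _ _ (Op (Op (Op (Op u (Op (Op x (Op (Op x x) x)) x)) x) (Op (Op (Op x x) x) (Op x x))) (Op (Op x x) x)) _); [one|].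
  apply (cons_trans _ _ (Op (Op (Op (Op u (Op (Op x (Op x x)) (Op x x))) x) (Op (Op (Op x x) x) (Op x x))) (Op (Op x x) x)) _); [one|].
  apply (cons_trans _ _ (Op (Op (Op (Op u x) x) (Op (Op (Op x x) x) (Op x x))) (Op (Op x x) x)) _); [one|].
  apply (cons_trans _ _ (Op (Op (Op (Op u (Op (Op (Op x x) x) (Op x x))) x) x) (Op (Op x x) x)) _); [one|].
  apply (cons_trans _ _ (Op (Op (Op (Op u (Op (Op (Op x x) x) (Op x x))) x) (Op x x)) (Op x x)) _); [one|].
  apply (cons_trans _ _ (Op (Op u (Op (Op (Op x x) x) (Op x x))) x) _); [one|].
  one.
Qed.

Lemma raw_L_B (u v : term) : (Op (Op u (Op (Op (Op x x) x) (Op x (Op x x)))) (Op x (Op (Op x x) x))) ≈ (Op (Op u (Op x (Op x x))) (Op (Op x x) x)).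
Proof.
  unfold T, N, nn.
  apply (cons_trans _ _ (Op (Op u (Op (Op x (Op (Op x x) x)) (Op x (Op x x)))) (Op (Op x x) x)) _); [one|].
  apply (cons_trans _ _ (Op (Op u (Op (Op x x) (Op (Op (Op x x) x) (Op x x)))) (Op (Op x x) x)) _); [one|].
  apply (cons_trans _ _ (Op (Op u (Op x (Op (Op (Op x x) (Op x x)) (Op x x)))) (Op (Op x x) x)) _); [one|].
  one.
Qed.

Lemma raw_L_C (u v : term) : (Op (Op (Op (Op u x) x) (Op (Op (Op x x) x) x)) (Op x x)) ≈ u.
Proof.
  unfold T, N, nn.
  apply (cons_trans _ _ (Op (Op (Op (Op u x) (Op x x)) (Op (Op (Op x x) x) x)) x) _); [one|].
  apply (cons_trans _ _ (Op (Op (Op (Op u x) (Op x x)) (Op x x)) (Op (Op x x) x)) _); [one|].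
  apply (cons_trans _ _ (Op (Op (Op (Op u x) (Op (Op x x) x)) (Op x x)) (Op x x)) _); [one|].
  apply (cons_trans _ _ (Op (Op u x) (Op (Op x x) x)) _); [one|].
  apply (cons_trans _ _ (Op (Op u (Op x x)) (Op x x)) _); [one|].
  one.
Qed.

Lemma raw_V (u v : term) : (Op (Op (Op (Op (Op (Op v (Op x v)) (Op (Op x x) x)) (Op (Op x x) x)) v) v) (Op (Op x x) x)) ≈ (Op (Op x (Op x x)) (Op (Op x x) x)).
Proof.
  unfold T, N, nn.
  apply (cons_trans _ _ (Op (Op (Op (Op (Op (Op v (Op x v)) v) (Op (Op x x) x)) (Op (Op x x) x)) v) (Op (Op x x) x)) _); [one|].
  apply (cons_trans _ _ (Op (Op (Op (Op (Op (Op v (Op v v)) x) (Op (Op x x) x)) (Op (Op x x) x)) v) (Op (Op x x) x)) _); [one|].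
  apply (cons_trans _ _ (Op (Op (Op (Op (Op (Op v (Op v v)) x) v) (Op (Op x x) x)) (Op (Op x x) x)) (Op (Op x x) x)) _); [one|].
  apply (cons_trans _ _ (Op (Op (Op (Op (Op (Op v (Op v v)) x) (Op x x)) (Op v x)) (Op (Op x x) x)) (Op (Op x x) x)) _); [one|].
  apply (cons_trans _ _ (Op (Op (Op (Op (Op (Op v (Op v v)) (Op v x)) (Op x x)) x) (Op (Op x x) x)) (Op (Op x x) x)) _); [one|].
  apply (cons_trans _ _ (Op (Op (Op (Op (Op (Op x (Op v v)) (Op v v)) (Op x x)) x) (Op (Op x x) x)) (Op (Op x x) x)) _); [one|].
  apply (cons_trans _ _ (Op (Op (Op (Op x (Op x x)) x) (Op (Op x x) x)) (Op (Op x x) x)) _); [one|].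
  apply (cons_trans _ _ (Op (Op (Op (Op x (Op x x)) (Op (Op x x) x)) (Op (Op x x) x)) x) _); [one|].
  apply (cons_trans _ _ (Op (Op (Op (Op x (Op x x)) (Op (Op x x) x)) (Op x x)) (Op x x)) _); [one|].
  apply (cons_trans _ _ (Op (Op (Op (Op x (Op x x)) (Op x x)) (Op x x)) (Op (Op x x) x)) _); [one|].
  one.
Qed.

Lemma raw_XX (u v : term) : (Op (Op (Op x x) (Op x (Op x x))) (Op (Op x x) x)) ≈ (Op (Op (Op (Op x x) x) (Op x x)) (Op (Op x x) x)).
Proof.
  unfold T, N, nn.
  apply (cons_trans _ _ (Op (Op (Op x x) (Op x x)) (Op (Op x (Op x x)) x)) _); [one|].
  apply (cons_trans _ _ (Op (Op x (Op x x)) (Op (Op x (Op x x)) (Op x x))) _); [one|].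
  apply (cons_trans _ _ (Op (Op x (Op x x)) x) _); [one|].
  apply (cons_trans _ _ (Op (Op (Op (Op x (Op x x)) x) (Op x x)) (Op x x)) _); [one|].
  apply (cons_trans _ _ (Op (Op (Op (Op x (Op x x)) x) x) (Op (Op x x) x)) _); [one|].
  one.
Qed.

Lemma T_comm a b c d u : T a b (T c d u) ≈ T c d (T a b u).
Proof. unfold T. apply (cons_trans _ _ (Op (Op (Op (Op u a) d) c) b) _); [one|]. one. Qed.
Lemma Rm a b u w : Op (T a b u) w ≈ T b a (Op u w).
Proof. unfold T. one. Qed.
Lemma Tinv' a b u : T (nn b) (nn a) (T a b u) ≈ u.
Proof. rewrite T_comm. apply Tinv_raw. Qed.

Inductive kind := K0 | K1 | K2.
Record gadget := G { gk : kind; gv : nat; gs : bool }.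
Definition kind_eqb k1 k2 := match k1, k2 with K0,K0 | K1,K1 | K2,K2 => true | _,_ => false end.
Lemma kind_eqb_spec k1 k2 : kind_eqb k1 k2 = true <-> k1 = k2.
Proof. destruct k1, k2; simpl; split; congruence. Qed.
Definition gadget_eq_dec (g h : gadget) : {g = h} + {g <> h}.
Proof. decide equality; [apply bool_dec | apply Nat.eq_dec | decide equality]. Defined.

Definition pargs (k : kind) (v : nat) : term * term :=
  match v with
  | O => match k with K0 => (Op x x, N) | K1 => (Op x (Op x x), N) | K2 => (x, x) end
  | S _ => match k with K0 => (Var v, N) | K1 => (N, Var v) | K2 => (Op x (Var v), N) end
  end.
Definition gargs (g : gadget) : term * term :=
  let '(a, b) := pargs (gk g) (gv g) in if gs g then (a, b) else (nn b, nn a).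
Definition ap (g : gadget) (u : term) : term := T (fst (gargs g)) (snd (gargs g)) u.
Fixpoint apply (w : list gadget) (u : term) : term :=
  match w with [] => u | g :: w' => ap g (apply w' u) end.
Definition ginv g := G (gk g) (gv g) (negb (gs g)).
Definition invw (w : list gadget) := rev (map ginv w).

#[global] Instance ap_Proper g : Proper (consequence B234 ==> consequence B234) (ap g).
Proof. intros ? ? H; unfold ap; rewrite H; reflexivity. Qed.
#[global] Instance apply_Proper w : Proper (consequence B234 ==> consequence B234) (apply w).
Proof. induction w; intros ? ? H; simpl; [exact H | rewrite (IHw _ _ H); reflexivity]. Qed.

Lemma apply_app w1 w2 u : apply (w1 ++ w2) u = apply w1 (apply w2 u).
Proof. induction w1; simpl; [reflexivity | rewrite IHw1; reflexivity]. Qed.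
Lemma ap_comm g h u : ap g (ap h u) ≈ ap h (ap g u).
Proof. apply T_comm. Qed.
Lemma ap_apply_comm g w u : ap g (apply w u) ≈ apply w (ap g u).
Proof. induction w; simpl; [reflexivity|]. rewrite ap_comm, IHw. reflexivity. Qed.
Lemma ap_inv g u : ap g (ap (ginv g) u) ≈ u.
Proof.
  destruct g as [k v s]; unfold ap, ginv, gargs; simpl.
  destruct (pargs k v) as [a b]; destruct s; simpl; [apply Tinv_raw | apply Tinv'].
Qed.
Lemma ap_inv' g u : ap (ginv g) (ap g u) ≈ u.
Proof. rewrite ap_comm; apply ap_inv. Qed.
Lemma apply_invw w u : apply (invw w) (apply w u) ≈ u.
Proof.
  induction w; simpl; [reflexivity|]. unfold invw; simpl. change (rev (map ginv w)) with (invw w). rewrite apply_app. simpl.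
  rewrite ap_inv'. apply IHw.
Qed.
Lemma apply_invw' w u : apply w (apply (invw w) u) ≈ u.
Proof.
  revert u; induction w; intro u; simpl; [reflexivity|]. unfold invw; simpl. change (rev (map ginv w)) with (invw w). rewrite apply_app. simpl.
  rewrite IHw. apply ap_inv.
Qed.

Definition sgn (g : gadget) : Z := if gs g then 1 else -1.
Definition val (g : gadget) (v : nat) (k : kind) : Z :=
  if Nat.eqb (gv g) v && kind_eqb (gk g) k then sgn g else 0.
Fixpoint cnt (w : list gadget) v k : Z :=
  match w with [] => 0 | g :: w' => val g v k + cnt w' v k end.
Definition ceq w w' := forall v k, cnt w v k = cnt w' v k.

Fixpoint rem (g : gadget) (w : list gadget) :=
  match w with [] => [] | h :: w' => if gadget_eq_dec g h then w' else h :: rem g w' end.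
Lemma rem_apply g w u : In g w -> apply w u ≈ ap g (apply (rem g w) u).
Proof.
  induction w as [|h w IH]; simpl; [tauto|]. intros Hin.
  destruct (gadget_eq_dec g h) as [ -> | Hne]; [reflexivity|].
  destruct Hin as [ -> | Hin]; [congruence|]. simpl. rewrite (IH Hin). apply ap_comm.
Qed.
Lemma rem_cnt g w v k : In g w -> cnt (rem g w) v k = cnt w v k - val g v k.
Proof.
  induction w as [|h w IH]; simpl; [tauto|]. intros Hin.
  destruct (gadget_eq_dec g h) as [ -> | Hne]; [lia|].
  destruct Hin as [ -> | Hin]; [congruence|]. simpl. rewrite (IH Hin). lia.
Qed.
Lemma rem_length g w : In g w -> S (length (rem g w)) = length w.
Proof.
  induction w as [|h w IH]; simpl; [tauto|]. intros Hin.
  destruct (gadget_eq_dec g h) as [ -> | Hne]; [reflexivity|].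
  destruct Hin as [ -> | Hin]; [congruence|]. simpl. rewrite (IH Hin). reflexivity.
Qed.
Lemma val_inv g v k : val (ginv g) v k = - val g v k.
Proof. destruct g as [kk vv s]; unfold val, ginv, sgn; simpl. destruct (_ && _); destruct s; simpl; lia. Qed.
Lemma val_self g : val g (gv g) (gk g) = sgn g.
Proof. unfold val. rewrite Nat.eqb_refl. destruct (gk g); reflexivity. Qed.
Lemma slot_eq g h : Nat.eqb (gv h) (gv g) && kind_eqb (gk h) (gk g) = true ->
  h = g \/ h = ginv g.
Proof.
  intros H. apply andb_prop in H as [H1 H2]. apply Nat.eqb_eq in H1. apply kind_eqb_spec in H2.
  destruct g as [k v s], h as [k' v' s']; simpl in *; subst.
  destruct s, s'; simpl; auto.
Qed.
Lemma notin_b1 g w : ~ In g w -> sgn g * cnt w (gv g) (gk g) <= 0.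
Proof.
  induction w as [|h w IH]; simpl; [lia|]. intros Hn.
  assert (IH' := IH (fun H => Hn (or_intror H))).
  unfold val. destruct (Nat.eqb (gv h) (gv g) && kind_eqb (gk h) (gk g)) eqn:E; [|lia].
  destruct (slot_eq _ _ E) as [ -> | -> ]; [exfalso; auto|].
  unfold sgn, ginv in *; cbn [gs] in *; destruct (gs g); cbn [negb] in *; lia.
Qed.
Lemma notin_b2 g w : ~ In (ginv g) w -> sgn g * cnt w (gv g) (gk g) >= 0.
Proof.
  induction w as [|h w IH]; simpl; [lia|]. intros Hn.
  assert (IH' := IH (fun H => Hn (or_intror H))).
  unfold val. destruct (Nat.eqb (gv h) (gv g) && kind_eqb (gk h) (gk g)) eqn:E; [|lia].
  destruct (slot_eq _ _ E) as [ -> | -> ]; [|exfalso; auto].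
  unfold sgn in *; destruct (gs g); lia.
Qed.

Lemma key_step (n : nat)
  (IH : forall w w' u, (length w + length w' <= n)%nat -> ceq w w' -> apply w u ≈ apply w' u)
  g w1 w' u : (length (g :: w1) + length w' <= S n)%nat -> ceq (g :: w1) w' ->
  apply (g :: w1) u ≈ apply w' u.
Proof.
  intros Hl Hc. simpl in Hl |- *.
  destruct (in_dec gadget_eq_dec g w') as [Hin|Hnin].
  - rewrite (rem_apply _ _ u Hin). apply ap_Proper. apply IH.
    + pose proof (rem_length _ _ Hin). lia.
    + intros v k. rewrite rem_cnt by exact Hin. rewrite <- Hc. simpl. lia.
  - destruct (in_dec gadget_eq_dec (ginv g) w1) as [Hin'|Hnin'].
    + rewrite (rem_apply _ _ u Hin'). rewrite ap_inv. apply IH.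
      * pose proof (rem_length _ _ Hin'). lia.
      * intros v k. rewrite rem_cnt by exact Hin'. rewrite val_inv. rewrite <- Hc. simpl. lia.
    + exfalso. pose proof (notin_b1 _ _ Hnin). pose proof (notin_b2 _ _ Hnin').
      specialize (Hc (gv g) (gk g)). simpl in Hc. rewrite val_self in Hc.
      unfold sgn in *; destruct (gs g); lia.
Qed.

Lemma key_aux n : forall w w' u, (length w + length w' <= n)%nat -> ceq w w' -> apply w u ≈ apply w' u.
Proof.
  induction n as [|n IHn]; intros w w' u Hl Hc.
  - destruct w, w'; simpl in Hl; try lia. reflexivity.
  - destruct w as [|g w1].
    + destruct w' as [|h w1']; [reflexivity|]. symmetry. apply (key_step n IHn).
      * simpl in *; lia.
      * intros v k; symmetry; apply Hc.
    + apply (key_step n IHn); assumption.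
Qed.
Lemma key w w' u : ceq w w' -> apply w u ≈ apply w' u.
Proof. intros; eapply key_aux; [apply le_n | assumption]. Qed.

Definition gA := G K0 0 true.
Definition gB := G K1 0 true.
Definition gC := G K2 0 true.

Definition swapP (g : gadget) : list gadget :=
  match gv g, gk g with
  | O, K0 => [] ++ invw [gA; gC]
  | O, K1 => [] ++ invw [gB]
  | O, K2 => [gC]
  | S m, K0 => [G K1 (S m) true]
  | S m, K1 => [G K0 (S m) true]
  | S m, K2 => [] ++ invw [G K0 (S m) true; G K1 (S m) true; G K2 (S m) true; gC]
  end.
Definition leftP (g : gadget) : list gadget :=
  match gv g, gk g with
  | O, K0 => [gB] ++ invw [gA]
  | O, K1 => [gB] ++ invw []
  | O, K2 => [] ++ invw [gC]
  | S m, K0 => [G K2 (S m) true] ++ invw [gA]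
  | S m, K1 => [gA] ++ invw [G K0 (S m) true; G K1 (S m) true; G K2 (S m) true]
  | S m, K2 => [G K0 (S m) true; gB] ++ invw [gA]
  end.
Definition swapG g := if gs g then swapP g else invw (swapP g).
Definition leftG g := if gs g then leftP g else invw (leftP g).

Lemma move a b W1 W2 : (forall u, T a b (apply W1 u) ≈ apply W2 u) ->
  forall u, T a b u ≈ apply (W2 ++ invw W1) u.
Proof.
  intros H u. transitivity (T a b (apply W1 (apply (invw W1) u))).
  - apply T_Proper. symmetry. apply apply_invw'.
  - rewrite H, apply_app. reflexivity.
Qed.

Lemma swap_pos g y : gs g = true ->
  T (snd (gargs g)) (fst (gargs g)) y ≈ apply (swapP g) y.
Proof.
  destruct g as [k v s]; simpl; intros ->.
  destruct v as [|m]; destruct k.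
  - exact (move _ _ [gA; gC] [] (fun u => raw_S_A u u) y).
  - exact (move _ _ [gB] [] (fun u => raw_S_B u u) y).
  - reflexivity.
  - reflexivity.
  - reflexivity.
  - exact (move _ _ [G K0 (S m) true; G K1 (S m) true; G K2 (S m) true; gC] []
             (fun u => raw_S_R u (Var (S m))) y).
Qed.

Lemma left_pos g y : gs g = true ->
  T (Op N (fst (gargs g))) (Op x (snd (gargs g))) y ≈ apply (leftP g) y.
Proof.
  destruct g as [k v s]; simpl; intros ->.
  destruct v as [|m]; destruct k.
  - exact (move _ _ [gA] [gB] (fun u => raw_L_A u u) y).
  - exact (move _ _ [] [gB] (fun u => raw_L_B u u) y).
  - exact (move _ _ [gC] [] (fun u => raw_L_C u u) y).
  - exact (move _ _ [gA] [G K2 (S m) true] (fun u => raw_L_P u (Var (S m))) y).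
  - exact (move _ _ [G K0 (S m) true; G K1 (S m) true; G K2 (S m) true] [gA]
             (fun u => raw_L_Q u (Var (S m))) y).
  - exact (move _ _ [gA] [G K0 (S m) true; gB] (fun u => raw_L_R u (Var (S m))) y).
Qed.

Lemma swap_inv_gen a b W : (forall y, T b a y ≈ apply W y) ->
  forall u, T (nn a) (nn b) u ≈ apply (invw W) u.
Proof.
  intros H u. transitivity (T (nn a) (nn b) (apply W (apply (invw W) u))).
  - apply T_Proper. symmetry. apply apply_invw'.
  - rewrite <- H. apply Tinv'.
Qed.

Lemma left_inv_gen a b W : (forall y, T (Op N a) (Op x b) y ≈ apply W y) ->
  forall s u, T (Op N (nn b)) (Op x (nn a)) (Op s u) ≈ apply (invw W) (Op s u).
Proof.
  intros H s u.
  assert (E : apply W (T (Op N (nn b)) (Op x (nn a)) (Op s u)) ≈ Op s u).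
  { rewrite <- H. rewrite <- Lm. rewrite <- Lm. rewrite Tinv_raw. reflexivity. }
  transitivity (apply (invw W) (apply W (T (Op N (nn b)) (Op x (nn a)) (Op s u)))).
  - symmetry; apply apply_invw.
  - apply apply_Proper; exact E.
Qed.

Lemma swapG_lemma g y : T (snd (gargs g)) (fst (gargs g)) y ≈ apply (swapG g) y.
Proof.
  unfold swapG. destruct (gs g) eqn:Hs; [apply swap_pos; exact Hs|].
  pose proof (swap_pos (G (gk g) (gv g) true)) as H.
  destruct g as [k v s]; simpl in *; subst s.
  unfold gargs in *; simpl in *. destruct (pargs k v) as [a b] eqn:Ep; simpl in *.
  apply (swap_inv_gen a b). intros y'. apply H. reflexivity.
Qed.

Lemma leftG_lemma g s y : T (Op N (fst (gargs g))) (Op x (snd (gargs g))) (Op s y) ≈ apply (leftG g) (Op s y).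
Proof.
  unfold leftG. destruct (gs g) eqn:Hs; [apply left_pos; exact Hs|].
  pose proof (left_pos (G (gk g) (gv g) true)) as H.
  destruct g as [k v ss]; simpl in *; subst ss.
  unfold gargs in *; simpl in *. destruct (pargs k v) as [a b] eqn:Ep; simpl in *.
  apply (left_inv_gen a b). intros y'. apply H. reflexivity.
Qed.

Definition SW (w : list gadget) := flat_map swapG w.
Definition LW (w : list gadget) := flat_map leftG w.

Lemma SW_lemma w u s : Op (apply w u) s ≈ apply (SW w) (Op u s).
Proof.
  induction w as [|g w IH]; simpl; [reflexivity|].
  unfold ap. rewrite Rm. rewrite IH. rewrite swapG_lemma. rewrite apply_app. reflexivity.
Qed.
Lemma LW_lemma w u s : Op s (apply w u) ≈ apply (LW w) (Op s u).
Proof.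
  induction w as [|g w IH]; simpl; [reflexivity|].
  unfold ap. rewrite Lm. rewrite leftG_lemma. rewrite IH. rewrite apply_app. reflexivity.
Qed.

Lemma main_nf : forall t, exists w, t ≈ apply w x.
Proof.
  induction t as [n|a [wa Ha] b [wb Hb]].
  - destruct n as [|m].
    + exists []. reflexivity.
    + set (W1 := [G K0 (S m) true; G K1 (S m) true; G K2 (S m) true]).
      exists (invw W1 ++ [gA]).
      rewrite apply_app. rewrite <- (apply_invw W1 (Var (S m))).
      apply apply_Proper. exact (raw_V x (Var (S m))).
  - assert (HX : Op x x ≈ apply (invw [gB] ++ [gA; gC]) x).
    { rewrite apply_app. rewrite <- (apply_invw [gB] (Op x x)).
      apply apply_Proper. exact (raw_XX x x). }
    exists (SW wa ++ LW wb ++ invw [gB] ++ [gA; gC]).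
    rewrite Ha, Hb. rewrite SW_lemma. rewrite LW_lemma. rewrite HX.
    rewrite !apply_app. reflexivity.
Qed.

Lemma eval_subst f r sg tm : eval f r (subst sg tm) = eval f (fun n => eval f r (sg n)) tm.
Proof. induction tm; simpl; congruence. Qed.

Lemma sound_f f (Hax : forall s tt, B234 s tt -> forall r, eval f r s = eval f r tt) :
  forall s tt, s ≈ tt -> holds_in f s tt.
Proof.
  intros s tt H; induction H; intro r; simpl.
  - rewrite !eval_subst. apply Hax; assumption.
  - reflexivity.
  - symmetry; apply IHconsequence.
  - rewrite IHconsequence1; apply IHconsequence2.
  - rewrite IHconsequence1, IHconsequence2; reflexivity.
Qed.

Ltac axcheck opd := intros s tt H r; unfold B234, B234_list in H; simpl in H;
  repeat (destruct H as [H|H]; [injection H as <- <-; simpl; unfold opd; lia|]); contradiction.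

Lemma sound s tt : s ≈ tt -> Sigma234 s tt.
Proof.
  intros H; split; [|split]; revert s tt H; apply sound_f.
  - axcheck op1.
  - axcheck op2.
  - axcheck op3.
Qed.

Fixpoint dsum (f : Z -> Z -> Z) (inc : Z -> Z -> Z) r (w : list gadget) : Z :=
  match w with
  | [] => 0
  | g :: w' => inc (eval f r (fst (gargs g))) (eval f r (snd (gargs g))) + dsum f inc r w'
  end.
Lemma eval_apply f inc (Hf : forall a p q, f (f a p) q = a + inc p q) r w u :
  eval f r (apply w u) = eval f r u + dsum f inc r w.
Proof.
  induction w; simpl; [lia|]. unfold ap, T. simpl. rewrite Hf, IHw. lia.
Qed.
Definition inc1 (p q : Z) := - p - q.
Definition inc2 (p q : Z) := - p + q.
Definition inc3 (p q : Z) := p - q.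
Lemma H1 a p q : op1 (op1 a p) q = a + inc1 p q. Proof. unfold op1, inc1; lia. Qed.
Lemma H2 a p q : op2 (op2 a p) q = a + inc2 p q. Proof. unfold op2, inc2; lia. Qed.
Lemma H3 a p q : op3 (op3 a p) q = a + inc3 p q. Proof. unfold op3, inc3; lia. Qed.

Definition dl (w : nat) : nat -> Z := fun n => if Nat.eqb n w then 1 else 0.

Ltac dcase opd incd m :=
  let g := fresh "g" in let w := fresh "w" in let IH := fresh "IH" in
  intro w; induction w as [|g w IH]; [simpl; lia|];
  destruct g as [k v s]; cbn [dsum cnt]; rewrite IH;
  unfold val, sgn, gargs, pargs, nn, N, dl, x; cbn [gv gk gs];
  destruct v as [|v]; destruct k; destruct s;
  cbn [pargs fst snd eval kind_eqb andb Nat.eqb];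
  try destruct (Nat.eqb v m); cbn [andb]; unfold opd, incd; lia.

Lemma dsum_v1 m : forall w, dsum op1 inc1 (dl (S m)) w =
  - cnt w (S m) K0 - cnt w (S m) K1 + cnt w (S m) K2.
Proof. dcase op1 inc1 m. Qed.
Lemma dsum_v2 m : forall w, dsum op2 inc2 (dl (S m)) w =
  - cnt w (S m) K0 + cnt w (S m) K1 - cnt w (S m) K2.
Proof. dcase op2 inc2 m. Qed.
Lemma dsum_v3 m : forall w, dsum op3 inc3 (dl (S m)) w =
  cnt w (S m) K0 - cnt w (S m) K1 - cnt w (S m) K2.
Proof. dcase op3 inc3 m. Qed.

Ltac xcase opd incd :=
  let g := fresh "g" in let w := fresh "w" in let IH := fresh "IH" in let Hx := fresh "Hx" in
  intro w; induction w as [|g w IH]; intro Hx; [simpl; lia|];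
  cbn [dsum cnt]; rewrite (IH (fun h Hh => Hx h (or_intror Hh)));
  assert (Hg := Hx g (or_introl eq_refl));
  destruct g as [k v s]; cbn [gv] in Hg; subst v; cbn [dsum cnt];
  unfold val, sgn, gargs, pargs, nn, N, dl, x; cbn [gv gk gs];
  destruct k; destruct s;
  cbn [pargs fst snd eval kind_eqb andb Nat.eqb]; unfold opd, incd; lia.

Lemma dsum_x1 : forall w, (forall g, In g w -> gv g = 0%nat) ->
  dsum op1 inc1 (dl 0) w = cnt w 0 K0 - 2 * cnt w 0 K2.
Proof. xcase op1 inc1. Qed.
Lemma dsum_x2 : forall w, (forall g, In g w -> gv g = 0%nat) ->
  dsum op2 inc2 (dl 0) w = cnt w 0 K0 + 2 * cnt w 0 K1.
Proof. xcase op2 inc2. Qed.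
Lemma dsum_x3 : forall w, (forall g, In g w -> gv g = 0%nat) ->
  dsum op3 inc3 (dl 0) w = - 3 * cnt w 0 K0.
Proof. xcase op3 inc3. Qed.

Definition xpart (w : list gadget) := filter (fun g => Nat.eqb (gv g) 0) w.
Definition vpart (w : list gadget) := filter (fun g => negb (Nat.eqb (gv g) 0)) w.

Lemma cnt_app w1 w2 v k : cnt (w1 ++ w2) v k = cnt w1 v k + cnt w2 v k.
Proof. induction w1; simpl; lia. Qed.
Lemma cnt_xpart w v k : cnt (xpart w) v k = if Nat.eqb v 0 then cnt w v k else 0.
Proof.
  induction w as [|g w IH]; cbn [xpart filter cnt]; [destruct (Nat.eqb v 0); reflexivity|].
  fold (xpart w).
  destruct (Nat.eqb (gv g) 0) eqn:E; cbn [cnt]; rewrite IH; unfold val;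
  destruct (Nat.eqb v 0) eqn:E2; try lia;
  destruct (Nat.eqb (gv g) v) eqn:E3; cbn [andb]; try lia;
  apply Nat.eqb_eq in E3; subst; congruence.
Qed.
Lemma cnt_vpart w v k : cnt (vpart w) v k = if Nat.eqb v 0 then 0 else cnt w v k.
Proof.
  induction w as [|g w IH]; cbn [vpart filter cnt]; [destruct (Nat.eqb v 0); reflexivity|].
  fold (vpart w).
  destruct (Nat.eqb (gv g) 0) eqn:E; cbn [negb cnt]; rewrite IH; unfold val;
  destruct (Nat.eqb v 0) eqn:E2; try lia;
  destruct (Nat.eqb (gv g) v) eqn:E3; cbn [andb]; try lia;
  apply Nat.eqb_eq in E3; subst; congruence.
Qed.
Lemma xpart_gv w : forall g, In g (xpart w) -> gv g = 0%nat.
Proof. intros g H. apply filter_In in H as [_ H]. apply Nat.eqb_eq; exact H. Qed.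

Lemma split_vx w u : apply w u ≈ apply (vpart w) (apply (xpart w) u).
Proof.
  rewrite <- apply_app. apply key. intros v k. rewrite cnt_app, cnt_vpart, cnt_xpart.
  destruct (Nat.eqb v 0); lia.
Qed.

Lemma xeq f inc (Hf : forall a p q, f (f a p) q = a + inc p q)
  (Hsf : forall a b, a ≈ b -> holds_in f a b) ws wt
  (HVP : forall u, apply (vpart ws) u ≈ apply (vpart wt) u)
  (E : forall r, eval f r (apply ws x) = eval f r (apply wt x)) :
  forall r, dsum f inc r (xpart ws) = dsum f inc r (xpart wt).
Proof.
  intros r.
  assert (A1 : holds_in f (apply ws x) (apply (vpart wt) (apply (xpart ws) x))).
  { apply Hsf. eapply cons_trans; [apply split_vx | apply HVP]. }
  assert (A2 : holds_in f (apply wt x) (apply (vpart wt) (apply (xpart wt) x))).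
  { apply Hsf. apply split_vx. }
  specialize (E r). rewrite (A1 r), (A2 r) in E. rewrite !(eval_apply f inc Hf) in E. lia.
Qed.

Lemma complete s tt : Sigma234 s tt -> s ≈ tt.
Proof.
  intros [S1 [S2 S3]].
  destruct (main_nf s) as [ws Hs]. destruct (main_nf tt) as [wt Ht].
  pose proof (sound _ _ Hs) as [Ss1 [Ss2 Ss3]].
  pose proof (sound _ _ Ht) as [St1 [St2 St3]].
  assert (E1 : forall r, eval op1 r (apply ws x) = eval op1 r (apply wt x))
    by (intro r; rewrite <- Ss1, <- St1; apply S1).
  assert (E2 : forall r, eval op2 r (apply ws x) = eval op2 r (apply wt x))
    by (intro r; rewrite <- Ss2, <- St2; apply S2).
  assert (E3 : forall r, eval op3 r (apply ws x) = eval op3 r (apply wt x))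
    by (intro r; rewrite <- Ss3, <- St3; apply S3).
  assert (HV : forall m k, cnt ws (S m) k = cnt wt (S m) k).
  { intros m.
    pose proof (E1 (dl (S m))) as F1. pose proof (E2 (dl (S m))) as F2. pose proof (E3 (dl (S m))) as F3.
    rewrite !(eval_apply _ _ H1) in F1. rewrite !(eval_apply _ _ H2) in F2.
    rewrite !(eval_apply _ _ H3) in F3.
    rewrite !dsum_v1 in F1. rewrite !dsum_v2 in F2. rewrite !dsum_v3 in F3.
    intros k; destruct k; lia. }
  assert (HVP : forall u, apply (vpart ws) u ≈ apply (vpart wt) u).
  { intro u. apply key. intros v k. rewrite !cnt_vpart. destruct v; simpl; [reflexivity|apply HV]. }
  assert (X1 := xeq _ _ H1 (fun a b H => proj1 (sound a b H)) ws wt HVP E1 (dl 0)).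
  assert (X2 := xeq _ _ H2 (fun a b H => proj1 (proj2 (sound a b H))) ws wt HVP E2 (dl 0)).
  assert (X3 := xeq _ _ H3 (fun a b H => proj2 (proj2 (sound a b H))) ws wt HVP E3 (dl 0)).
  rewrite !dsum_x1 in X1 by apply xpart_gv. rewrite !dsum_x2 in X2 by apply xpart_gv.
  rewrite !dsum_x3 in X3 by apply xpart_gv.
  rewrite !cnt_xpart in X1. rewrite !cnt_xpart in X2. rewrite !cnt_xpart in X3.
  cbn [Nat.eqb] in X1, X2, X3.
  rewrite Hs, Ht. apply key. intros v k. destruct v as [|m]; [|apply HV].
  destruct k; lia.
Qed.

Theorem theorem7p1 : is_basis B234 Sigma234.
Proof. intros s tt; split; [apply sound | apply complete]. Qed.
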